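(* Let $D_V=\mathbb{C}[w_0,\dots,w_s]\langle\partial_{w_0},\dots,\partial_{w_s}\rangle$ and let $I\subset D_V$ be a left ideal that can be generated by finitely many elements of pure order. Put $M=D_V/I$. Then for all $k\in\mathbb{Z}$ and $p$, the natural map $$V^kD_V\cap F_pD_V\longrightarrow V^k_{ind}M\cap F^{ord}_pM$$ is surjective.
   Context: $F_\bullet D_V$ is the order filtration. $V^\bullet D_V$ is the $V$-filtration along $w_0=0$: $V^0D_V$ is spanned by the monomials $w^\gamma\partial_w^\delta$ with $\gamma_0\geq\delta_0$, $V^kD_V=w_0^kV^0D_V$ and $V^{-k}D_V=\sum_{j\ge0,\,j\le k}\partial_{w_0}^jV^0D_V$ for $k>0$ (so $V^kD_V$ is spanned by monomials with $\gamma_0-\delta_0\ge k$). $V^k_{ind}M=(V^kD_V+I)/I$, $F^{ord}_pM=(F_pD_V+I)/I$. An element $P=\sum c_{\gamma\delta}w^\gamma\partial_w^\delta$ (standard form) is of pure order $k$ if every monomial with $c_{\gamma\delta}\ne0$ lies in $V^kD_V$ and has nonzero class in $V^kD_V/V^{k+1}D_V$, i.e. $\gamma_0-\delta_0=k$ for all its monomials. *)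

(* Defs.v *)
(* Weyl algebra D_V over C = R[i] (R : realType), realised
   as its faithful action on the polynomial ring C[w_0..w_s]. *)
From mathcomp Require Import all_boot all_algebra.
From mathcomp Require Import reals.
From mathcomp.real_closed Require Import complex.
From mathcomp Require Import mpoly.

Set Implicit Arguments.
Unset Strict Implicit.
Unset Printing Implicit Defensive.
Import GRing.Theory.
Local Open Scope ring_scope.

Section Weyl.
Variables (R : realType) (s : nat).

(* C[w_0, ..., w_s] : s+1 variables, w_0 is index ord0 *)
Definition wpoly := {mpoly R[i][s.+1]}.
(* linear operators on C[w]; D_V is a subring of these, product = composition *)
Definition wop := wpoly -> wpoly.
Definition wmon := 'X_{1..s.+1}.

Definition mon (gamma delta : wmon) : wop := fun f => 'X_[gamma] * f^`M[delta].

Definition lincomb (c : seq (R[i] * (wmon * wmon))) : wop :=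
  fun f => \sum_(t <- c) t.1 *: mon t.2.1 t.2.2 f.

Definition spanned_by (ok : wmon -> wmon -> bool) (P : wop) : Prop :=
  exists c : seq (R[i] * (wmon * wmon)),
    all (fun t => ok t.2.1 t.2.2) c /\ forall f, P f = lincomb c f.

Definition inD (P : wop) : Prop := spanned_by (fun _ _ => true) P.

Definition inV (k : int) (P : wop) : Prop :=
  spanned_by (fun gamma delta => k <= (gamma ord0)%:Z - (delta ord0)%:Z) P.

Definition inF (p : nat) (P : wop) : Prop :=
  spanned_by (fun _ delta => (mdeg delta <= p)%N) P.

Definition pure_order (k : int) (P : wop) : Prop :=
  spanned_by (fun gamma delta => (gamma ord0)%:Z - (delta ord0)%:Z == k) P.

Definition opsub (P Q : wop) : wop := fun f => P f - Q f.

Definition in_left_ideal (m : nat) (G : 'I_m -> wop) (P : wop) : Prop :=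
  exists Q : 'I_m -> wop, (forall j, inD (Q j)) /\
    forall f, P f = \sum_(j < m) Q j (G j f).

(* For M = D_V / I, the class [X] of X in D_V lies in
   V^k_ind M = (V^k D_V + I)/I, resp. F^ord_p M = (F_p D_V + I)/I *)
Definition in_Vind (m : nat) (G : 'I_m -> wop) (k : int) (X : wop) : Prop :=
  exists A, inV k A /\ in_left_ideal G (opsub X A).

Definition in_Ford (m : nat) (G : 'I_m -> wop) (p : nat) (X : wop) : Prop :=
  exists B, inF p B /\ in_left_ideal G (opsub X B).

End Weyl.

(* Main.v *)
Require Import Defs.
From mathcomp Require Import all_boot all_algebra.
From mathcomp Require Import reals.
From mathcomp.real_closed Require Import complex.
From mathcomp Require Import mpoly.
From mathcomp Require Import zify.
Set Implicit Arguments. Unset Strict Implicit. Unset Printing Implicit Defensive.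
Import GRing.Theory.
Local Open Scope ring_scope.

Section Aux.
Variables (R : realType) (s : nat).
Local Notation P := (wpoly R s).
Local Notation M := (wmon s).
Local Notation mon := (@mon R s).
Local Notation lincomb := (@lincomb R s).

Definition hpart (Pr : pred M) (f : P) : P :=
  \sum_(m <- msupp f | Pr m) f@_m *: 'X_[m].

Lemma hpartE Pr f m : (hpart Pr f)@_m = if Pr m then f@_m else 0.
Proof.
rewrite /hpart raddf_sum /=.
rewrite big_mkcond /=.
under eq_bigr => x _ do rewrite mcoeffZ mcoeffX.
case: (boolP (m \in msupp f)) => Hm.
  rewrite (bigD1_seq m) ?msupp_uniq //= eqxx mulr1.
  rewrite big1 ?addr0; first by [].
  by move=> x /negbTE ->; case: (Pr x); rewrite ?mulr0.
rewrite big1; first by case: (Pr m); rewrite ?memN_msupp_eq0.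
move=> x _; case: eqVneq => [ex|]; last by case: (Pr x); rewrite ?mulr0.
by rewrite ex memN_msupp_eq0 // mul0r; case: (Pr m).
Qed.

Lemma hpartL Pr (a : R[i]) f g : hpart Pr (a *: f + g) = a *: hpart Pr f + hpart Pr g.
Proof.
apply/mpolyP => m; rewrite mcoeffD mcoeffZ !hpartE mcoeffD mcoeffZ.
by case: (Pr m); rewrite ?mulr0 ?addr0.
Qed.

Lemma hpart0 Pr : hpart Pr 0 = 0.
Proof. by apply/mpolyP => m; rewrite hpartE !mcoeff0 if_same. Qed.

Lemma hpartD Pr f g : hpart Pr (f + g) = hpart Pr f + hpart Pr g.
Proof. by have := hpartL Pr 1 f g; rewrite !scale1r. Qed.

Lemma hpartZ Pr a f : hpart Pr (a *: f) = a *: hpart Pr f.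
Proof. by rewrite -[a *: f]addr0 hpartL hpart0 addr0. Qed.

Lemma hpartB Pr f g : hpart Pr (f - g) = hpart Pr f - hpart Pr g.
Proof. by have := hpartL Pr (-1) g f; rewrite !scaleN1r addrC [_ + hpart _ _]addrC. Qed.

Lemma hpart_sum Pr (T : Type) (r : seq T) (F : T -> P) :
  hpart Pr (\sum_(x <- r) F x) = \sum_(x <- r) hpart Pr (F x).
Proof.
elim: r => [|x r IH]; first by rewrite !big_nil hpart0.
by rewrite !big_cons hpartD IH.
Qed.

Lemma hpartX Pr m : hpart Pr 'X_[m] = if Pr m then 'X_[m] else 0.
Proof.
apply/mpolyP => m'; rewrite hpartE mcoeffX.
case: eqVneq => [<-|ne]; first by case: (Pr m); rewrite ?mcoeffX ?eqxx ?mcoeff0.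
case: (Pr m); case: (Pr m'); by rewrite ?mcoeffX ?(negbTE ne) ?mcoeff0.
Qed.


Lemma monL g d (a : R[i]) f h : mon g d (a *: f + h) = a *: mon g d f + mon g d h.
Proof. by rewrite /mon mderivmD mderivmZ mulrDr scalerAr. Qed.

Lemma monX g d m : exists (c : R[i]) (m' : M), (mon g d 'X_[m] = c *: 'X_[m']) /\ ((c = 0) \/ ((m' ord0)%:Z = (m ord0)%:Z + (g ord0)%:Z - (d ord0)%:Z)).
Proof.
rewrite /mon mderivmX -scalerAr -mpolyXD.
eexists; eexists; split; first reflexivity.
case: (ltnP (m ord0) (d ord0)) => H.
  by left; rewrite (bigD1 ord0) //= ffact_small // mul0n.
by right; rewrite mnmDE mnmBE; lia.
Qed.

Definition islin (Y : wop R s) := forall (a : R[i]) f h, Y (a *: f + h) = a *: Y f + Y h.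

Lemma islin0 Y : islin Y -> Y 0 = 0.
Proof. by move=> HY; have := HY 1 0 0; rewrite !scale1r !addr0 => /(congr1 (fun x => x - Y 0)) /=; rewrite addrK subrr => /esym. Qed.

Lemma islinZ Y : islin Y -> forall a f, Y (a *: f) = a *: Y f.
Proof. by move=> HY a f; have := HY a f 0; rewrite addr0 islin0 // addr0. Qed.

Lemma islinD Y : islin Y -> forall f h, Y (f + h) = Y f + Y h.
Proof. by move=> HY f h; have := HY 1 f h; rewrite !scale1r. Qed.

Lemma islin_sum Y (T : Type) (r : seq T) (F : T -> P) : islin Y ->
  Y (\sum_(x <- r) F x) = \sum_(x <- r) Y (F x).
Proof.
move=> HY; elim: r => [|x r IH]; first by rewrite !big_nil islin0.
by rewrite !big_cons islinD // IH.
Qed.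

Lemma islin_exp Y f : islin Y -> Y f = \sum_(m <- msupp f) f@_m *: Y 'X_[m].
Proof.
move=> HY; rewrite {1}(mpolyE f) islin_sum //.
by apply: eq_bigr => m _; rewrite islinZ.
Qed.

Lemma lincomb_lin c : islin (lincomb c).
Proof.
move=> a f h; rewrite /lincomb scaler_sumr -big_split /=.
by apply: eq_bigr => t _; rewrite monL scalerDr !scalerA mulrC.
Qed.

Lemma lincomb_split (pr : pred (R[i] * (M * M))) c f :
  lincomb c f = lincomb (filter pr c) f + lincomb (filter (predC pr) c) f.
Proof. by rewrite /lincomb !big_filter (bigID pr). Qed.

Lemma lincomb_nil f : lincomb [::] f = 0.
Proof. by rewrite /lincomb big_nil. Qed.

Definition vdeg (g d : M) : int := (g ord0)%:Z - (d ord0)%:Z.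
Definition lowp (k : int) (t : R[i] * (M * M)) := ~~ (k <= vdeg t.2.1 t.2.2).

Definition hp (m : M) (k : int) := hpart (fun m' : M => ~~ ((m ord0)%:Z + k <= (m' ord0)%:Z)).

Definition proj (k : int) (Y : wop R s) : wop R s := fun f =>
  \sum_(m <- msupp f) f@_m *: hp m k (Y 'X_[m]).

Lemma proj_ext k Y Y' : (forall f, Y f = Y' f) -> forall f, proj k Y f = proj k Y' f.
Proof. by move=> H f; rewrite /proj; apply: eq_bigr => m _; rewrite H. Qed.

Lemma projX k Y m : proj k Y 'X_[m] = hp m k (Y 'X_[m]).
Proof. by rewrite /proj msuppX big_seq1 mcoeffX eqxx scale1r. Qed.

Lemma hp_mon k m g d : hp m k (mon g d 'X_[m]) = if k <= vdeg g d then 0 else mon g d 'X_[m].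
Proof.
have [c [m' [-> [->|Hm']]]] := monX g d m.
  by rewrite scale0r /hp hpart0 if_same.
rewrite /hp hpartZ hpartX.
have -> : ((m ord0)%:Z + k <= (m' ord0)%:Z) = (k <= vdeg g d).
  by rewrite Hm' /vdeg; apply/idP/idP; lia.
by case: (k <= vdeg g d); rewrite ?scaler0.
Qed.

Lemma proj_lincomb k c f : proj k (lincomb c) f = lincomb (filter (lowp k) c) f.
Proof.
rewrite /proj (islin_exp f (lincomb_lin (filter (lowp k) c))); apply: eq_bigr => m _; congr (_ *: _).
rewrite /lincomb /hp hpart_sum big_filter [RHS]big_mkcond /=; apply: eq_bigr => t _.
have := hpartZ (fun m' : M => ~~ ((m ord0)%:Z + k <= (m' ord0)%:Z)) t.1 (mon t.2.1 t.2.2 'X_[m]).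
move=> ->; rewrite -/(hp m k _) hp_mon /lowp; case: (k <= _) => /=; by rewrite ?scaler0.
Qed.


Lemma hpart_ext Pr Pr' f : (forall m, Pr m = Pr' m) -> hpart Pr f = hpart Pr' f.
Proof. by move=> H; rewrite /hpart; apply: eq_bigl. Qed.

Lemma proj_comp k kj (Q G0 : wop R s) cQ cG :
  (forall f, Q f = lincomb cQ f) -> all (fun t => vdeg t.2.1 t.2.2 == kj) cG ->
  (forall f, G0 f = lincomb cG f) ->
  forall f, proj k (fun x => Q (G0 x)) f = proj (k - kj) Q (G0 f).
Proof.
move=> HQ Hall HG f.
have HQl : islin Q by move=> a x y; rewrite !HQ lincomb_lin.
set L := lincomb (filter (lowp (k - kj)) cQ).
have HL : islin L by apply: lincomb_lin.
rewrite (proj_ext _ HQ) proj_lincomb -/L.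
have HLG : islin (fun x => L (G0 x)) by move=> a x y; rewrite HG lincomb_lin HL -!HG.
rewrite (islin_exp f HLG) /proj; apply: eq_bigr => m _; congr (_ *: _).
have key : forall g d, vdeg g d = kj -> hp m k (Q (mon g d 'X_[m])) = L (mon g d 'X_[m]).
  move=> g d Hgd; have [c [m' [-> Hc]]] := monX g d m.
  rewrite (islinZ HQl) (islinZ HL).
  have := hpartZ (fun m'0 : M => ~~ ((m ord0)%:Z + k <= (m'0 ord0)%:Z)) c (Q 'X_[m']).
  rewrite /hp => ->.
  case: Hc => [->|Hm']; first by rewrite !scale0r.
  congr (_ *: _).
  rewrite /L -proj_lincomb -(proj_ext _ HQ) projX /hp; apply: hpart_ext => m''.
  by rewrite Hm'; move: Hgd; rewrite /vdeg => Hgd; apply/idP/idP; lia.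
rewrite HG /lincomb (islin_sum _ _ HQl) (islin_sum _ _ HL) /hp hpart_sum.
rewrite big_seq [RHS]big_seq; apply: eq_bigr => t Ht.
rewrite (islinZ HQl) (islinZ HL).
have := hpartZ (fun m'0 : M => ~~ ((m ord0)%:Z + k <= (m'0 ord0)%:Z)) t.1 (Q (mon t.2.1 t.2.2 'X_[m])).
move=> ->; congr (_ *: _); apply: key.
by move/allP: Hall => /(_ t Ht) /eqP.
Qed.


Lemma inD_ext (Y Y' : wop R s) : (forall f, Y f = Y' f) -> inD Y -> inD Y'.
Proof. by move=> H [c [Hc Hf]]; exists c; split => // f; rewrite -H. Qed.

Lemma inD_sub (Y1 Y2 : wop R s) : inD Y1 -> inD Y2 -> inD (opsub Y1 Y2).
Proof.
move=> [c1 [_ H1]] [c2 [_ H2]].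
exists (c1 ++ map (fun t => (- t.1, t.2)) c2); split; first by apply/allP.
move=> f; rewrite /opsub H1 H2 /lincomb big_cat big_map /= -sumrN.
by congr (_ + _); apply: eq_bigr => t _; rewrite scaleNr.
Qed.

Lemma inD0 : inD (fun _ : P => 0).
Proof. by exists [::]; split => // f; rewrite lincomb_nil. Qed.

Variables (n : nat) (G : 'I_n -> wop R s).

Lemma ideal_ext (Y Y' : wop R s) : (forall f, Y f = Y' f) ->
  in_left_ideal G Y -> in_left_ideal G Y'.
Proof. by move=> H [Q [HQ Hf]]; exists Q; split => // f; rewrite -H. Qed.

Lemma ideal_sub (Y1 Y2 : wop R s) : in_left_ideal G Y1 -> in_left_ideal G Y2 ->
  in_left_ideal G (opsub Y1 Y2).
Proof.
move=> [Q1 [HQ1 H1]] [Q2 [HQ2 H2]].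
exists (fun j => opsub (Q1 j) (Q2 j)); split; first by move=> j; apply: inD_sub.
by move=> f; rewrite /opsub H1 H2 -sumrB.
Qed.

Lemma ideal0 : in_left_ideal G (fun _ => 0).
Proof.
exists (fun _ => fun _ => 0); split; first by move=> j; apply: inD0.
by move=> f; rewrite big1.
Qed.

Lemma ideal_proj (kj : 'I_n -> int) Y k :
  (forall j, pure_order (kj j) (G j)) -> in_left_ideal G Y -> in_left_ideal G (proj k Y).
Proof.
move=> HG [Q [HQ HY]].
exists (fun j => proj (k - kj j) (Q j)); split.
  move=> j; case: (HQ j) => c [_ Hc].
  exists (filter (lowp (k - kj j)) c); split; first by apply/allP.
  by move=> f; rewrite (proj_ext _ Hc) proj_lincomb.
move=> f; rewrite /proj.
under eq_bigr => x _ do rewrite HY /hp hpart_sum scaler_sumr.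
rewrite exchange_big /=; apply: eq_bigr => j _.
case: (HQ j) => cQ [_ HcQ]; case: (HG j) => cG [HcG HG0].
by have := proj_comp k HcQ HcG HG0 f; rewrite /proj /hp.
Qed.

End Aux.

From Stdlib Require Import IndefiniteDescription.
From mathcomp Require Import ring.
Unset Implicit Arguments.

Theorem lemma2p15 (R : realType) (s m : nat) (G : 'I_m -> wop R s) :
  (forall j, exists kj : int, pure_order kj (G j)) ->
  forall (k : int) (p : nat) (X : wop R s),
    inD X -> in_Vind G k X -> in_Ford G p X ->
    exists P : wop R s,
      inV k P /\ inF p P /\ in_left_ideal G (opsub P X).
Proof.
move=> HG k p X HX [A [HA HXA]] [B [HB HXB]].
pose kj j := proj1_sig (constructive_indefinite_description _ (HG j)).
have Hkj : forall j, pure_order (kj j) (G j).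
  by move=> j; exact: (proj2_sig (constructive_indefinite_description _ (HG j))).
case: HA => cA [HcA HAf]; case: HB => cB [HcB HBf].
have HY : in_left_ideal G (opsub B A).
  apply: (ideal_ext _ (ideal_sub HXA HXB)) => f; rewrite /opsub.
  ring.
have HPY := ideal_proj k Hkj HY.
have Hproj : forall f, proj k (opsub B A) f = lincomb (filter (lowp k) cB) f.
  move=> f.
  have HBA : forall f, opsub B A f = lincomb (cB ++ map (fun t => (- t.1, t.2)) cA) f.
    move=> g; rewrite /opsub HBf HAf /lincomb big_cat big_map /= -sumrN.
    by congr (_ + _); apply: eq_bigr => t _; rewrite scaleNr.
  rewrite (proj_ext _ HBA) proj_lincomb filter_cat.
  have -> : [seq t <- map (fun t => (- t.1, t.2)) cA | lowp k t] = [::].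
    elim: cA HcA {HAf HXA HBA} => //= t cA IH /andP[Ht HcA'].
    by rewrite /lowp /vdeg /= Ht /= IH.
  by rewrite cats0.
pose pr := fun t : R[i] * (wmon s * wmon s) => k <= vdeg t.2.1 t.2.2.
exists (lincomb (filter pr cB)); split; last split.
- exists (filter pr cB); split => //.
  by apply/allP => t; rewrite mem_filter => /andP[Ht _].
- exists (filter pr cB); split => //.
  by apply/allP => t; rewrite mem_filter => /andP[_ Ht]; move/allP: HcB => /(_ t Ht).
have Hsplit : forall f, B f = lincomb (filter pr cB) f + lincomb (filter (lowp k) cB) f.
  by move=> f; rewrite HBf (lincomb_split pr).
apply: (ideal_ext _ (ideal_sub (ideal_sub (ideal0 G) HXB) HPY)) => f.
rewrite /opsub Hproj (Hsplit f).
ring.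
Qed.
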